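(* Let $(X,\delta,c)$ be an accepting automaton over $\Sigma$ such that the smallest Boolean subalgebra of $P(X)$ containing $\langle c\rangle$ is $P(X)$ itself. Then $\mathsf{cofree}(X,\delta)$ can be entirely embedded in $\mu\mathrm{PL}(\delta,c)$: every language belonging to $\mathsf{cofree}(X,\delta)$ is the language $L(\mathcal{U})$ of some state $\mathcal{U}$ of $\mu\mathrm{PL}(\delta,c)$.
   Context: $\Sigma$ is a finite alphabet, $\Sigma^\ast$ the free monoid with empty word $\epsilon$, $u^r$ the reversal of $u$. An accepting automaton is $(X,\delta,c)$ with $\delta:X\to X^\Sigma$ (extended to words by $\delta(x)(\epsilon)=x$, $\delta(x)(wa)=\delta(\delta(x)(w))(a)$) and $c\subseteq X$; for $x\in X$, $U\subseteq X$, $L(x,U)=\{u\mid\delta(x)(u)\in U\}$. $\mathsf{cofree}(X,\delta)$ is the smallest set of coequations satisfied by $(X,\delta)$: the least subautomaton of the final automaton of languages ($2^{\Sigma^\ast}$ with derivative transitions $V\mapsto\{w\mid aw\in V\}$ and final states $\{V\mid\epsilon\in V\}$) containing all languages $L(x,U)$ with $x\in X$, $U\subseteq X$. Define $\widehat{\delta}(U)(a)=\{x\mid\delta(x)(a)\in U\}$ for $U\subseteq X$, extended to words, so $\widehat{\delta}(U)(w)=\{x\mid\delta(x)(w^r)\in U\}$. Let $\langle c\rangle=\{\widehat{\delta}(c)(w)\mid w\in\Sigma^\ast\}$ and $u\approx v$ iff $\widehat{\delta}(U)(u)=\widehat{\delta}(U)(v)$ for all $U\in\langle c\rangle$. $\mu\mathrm{PL}(\delta,c)$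 has state space $P(\Sigma^\ast/{\approx})$, transition $\widehat{\sigma}(\mathcal{U})(u)=\{[w]\mid[wu^r]\in\mathcal{U}\}$ and final states $\{\mathcal{U}\mid[\epsilon]\in\mathcal{U}\}$; $L(\mathcal{U})=\{u\mid[\epsilon]\in\widehat{\sigma}(\mathcal{U})(u)\}$. *)

(* Defs.v *)
From mathcomp Require Import all_boot.
From mathcomp Require Import boolp classical_sets.

Set Implicit Arguments.
Unset Strict Implicit.
Unset Printing Implicit Defensive.

Local Open Scope classical_set_scope.

Section Automata.
Variables (Sigma : finType) (X : Type).

Definition dstar (delta : X -> Sigma -> X) (x : X) (w : seq Sigma) : X :=
  foldl delta x w.

Definition Lang (delta : X -> Sigma -> X) (x : X) (U : set X) : set (seq Sigma) :=
  [set u | U (dstar delta x u)].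

(* derivative transition of the final automaton of languages *)
Definition lderiv (V : set (seq Sigma)) (a : Sigma) : set (seq Sigma) :=
  [set w | V (a :: w)].

(* cofree(X,delta): the least subautomaton (derivative-closed set of languages)
   of the final automaton containing every L(x,U). *)
Inductive cofree (delta : X -> Sigma -> X) : set (seq Sigma) -> Prop :=
| cofree_gen x U : cofree delta (Lang delta x U)
| cofree_der V a : cofree delta V -> cofree delta (lderiv V a).

Definition hatdelta (delta : X -> Sigma -> X) (U : set X) (w : seq Sigma) : set X :=
  foldl (fun V a => [set x | V (delta x a)]) U w.

Definition angle (delta : X -> Sigma -> X) (c : set X) : set (set X) :=
  [set V | exists w, V = hatdelta delta c w].

Definition approx (delta : X -> Sigma -> X) (c : set X) (u v : seq Sigma) : Prop :=
  forall U, angle delta c U -> hatdelta delta U u = hatdelta delta U v.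

Definition cls (delta : X -> Sigma -> X) (c : set X) (w : seq Sigma) : set (seq Sigma) :=
  [set v | approx delta c w v].

(* states of muPL(delta,c): subsets of Sigma^*/~, i.e. sets of classes *)
Definition muPL_state (delta : X -> Sigma -> X) (c : set X)
    (UU : set (set (seq Sigma))) : Prop :=
  forall C, UU C -> exists w, C = cls delta c w.

Definition sigmahat (delta : X -> Sigma -> X) (c : set X)
    (UU : set (set (seq Sigma))) (u : seq Sigma) : set (set (seq Sigma)) :=
  [set C | exists w, C = cls delta c w /\ UU (cls delta c (w ++ rev u))].

Definition LmuPL (delta : X -> Sigma -> X) (c : set X)
    (UU : set (set (seq Sigma))) : set (seq Sigma) :=
  [set u | sigmahat delta c UU u (cls delta c [::])].

End Automata.

Inductive boolgen (X : Type) (G : set (set X)) : set X -> Prop :=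
| bg_gen U : G U -> boolgen G U
| bg_empty : boolgen G set0
| bg_compl U : boolgen G U -> boolgen G (~` U)
| bg_union U V : boolgen G U -> boolgen G V -> boolgen G (U `|` V).

(* Main.v *)
Require Import Defs.
From mathcomp Require Import all_boot.
From mathcomp Require Import boolp classical_sets.

Local Open Scope classical_set_scope.

Lemma hdE (Sigma : finType) (X : Type) (delta : X -> Sigma -> X) (U : set X)
  (w : seq Sigma) x : hatdelta delta U w x = U (dstar delta x (rev w)).
Proof.
elim: w U x => [|a w IH] U x //=.
by rewrite IH rev_cons /dstar foldl_rcons.
Qed.

Theorem mainTheorem9 (Sigma : finType) (X : Type)
    (delta : X -> Sigma -> X) (c : set X) :
  (forall U : set X, boolgen (angle delta c) U) ->
  forall K : set (seq Sigma), cofree delta K ->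
  exists UU : set (set (seq Sigma)),
    muPL_state delta c UU /\ LmuPL delta c UU = K.
Proof.
move=> Hall K HK.
have key : forall a b, approx delta c a b ->
    forall x, dstar delta x (rev a) = dstar delta x (rev b).
  move=> a b Hab.
  have P : forall U, boolgen (angle delta c) U ->
      forall x, U (dstar delta x (rev a)) <-> U (dstar delta x (rev b)).
    move=> U; elim => {U}.
    - move=> U HU x; have := Hab U HU.
      move=> E; rewrite -!hdE E; by [].
    - by [].
    - move=> U _ IH x /=; split => H1 H2; apply: H1; by apply/IH.
    - move=> U V _ IU _ IV x /=; split; case=> H.
      + by left; apply/IU.
      + by right; apply/IV.
      + by left; apply/IU.
      + by right; apply/IV.
  move=> x.
  have := P [set y | y = dstar delta x (rev a)] (Hall _) x.
  by case=> H _; rewrite -(H erefl).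
have Kinv : forall u v, (forall x, dstar delta x u = dstar delta x v) -> K u -> K v.
  elim: HK => {K}.
  - move=> x U u v H; rewrite /Lang /= H; by [].
  - move=> V a _ IH u v H; rewrite /lderiv /= => Hu.
    apply: (IH (a :: u)) => // y; exact: H.
exists [set C | exists w, C = cls delta c w /\ K (rev w)].
split.
  by move=> C [w [-> _]]; exists w.
apply/seteqP; split => u /=.
- case=> w [Hw [w' [Heq Kw']]].
  have A1 : approx delta c (w ++ rev u) w'.
    have : cls delta c w' w' by move=> U _.
    by rewrite -Heq.
  have A0 : approx delta c [::] w.
    have : cls delta c w w by move=> U _.
    by rewrite -Hw.
  apply: (Kinv (rev w')) => // x.
  have := key _ _ A1 x.
  rewrite rev_cat revK /dstar foldl_cat => <-.
  have := key _ _ A0 (foldl delta x u).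
  by rewrite /dstar /= => <-.
- move=> Ku; exists [::]; split => //.
  exists (rev u); split; first by rewrite cat0s.
  by rewrite revK.
Qed.
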